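(* Let $(N_r)_{r\in\mathbb{Z}}$ be the Narayana sequence. For $1\le a\le 8$ define $(p_a,q_a)$ by $(p_1,q_1)=(1,0)$, $(p_2,q_2)=(1,2)$, $(p_3,q_3)=(4,-3)$, $(p_4,q_4)=(5,-2)$, $(p_5,q_5)=(6,5)$, $(p_6,q_6)=(10,-1)$, $(p_7,q_7)=(15,-7)$, $(p_8,q_8)=(21,6)$. Then for each $1\le a\le 8$ and every integer $m$, $N_{m}=p_{a}N_{m-a}+q_{a}N_{m-2a}+N_{m-3a}$.
   Context: The Narayana sequence $(N_r)_{r\in\mathbb{Z}}$ is defined by $N_0=0$, $N_1=N_2=1$ and $N_r=N_{r-1}+N_{r-3}$ for all integers $r$ (extended to negative indices via $N_{r-3}=N_r-N_{r-1}$). *)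

(* Defs.v *)
From Stdlib Require Import ZArith.
Open Scope Z_scope.

(* forward: state (N_k, N_{k+1}, N_{k+2}) starting at k = 0 *)
Fixpoint nar_fwd (n : nat) : Z * Z * Z :=
  match n with
  | O => (0, 1, 1)
  | S n' => let '(a, b, c) := nar_fwd n' in (b, c, c + a)
  end.

(* backward: state (N_{-k}, N_{-k+1}, N_{-k+2}); step uses N_{r-3} = N_r - N_{r-1} *)
Fixpoint nar_bwd (n : nat) : Z * Z * Z :=
  match n with
  | O => (0, 1, 1)
  | S n' => let '(a, b, c) := nar_bwd n' in (c - b, a, b)
  end.

Definition narayana (r : Z) : Z :=
  if 0 <=? r then fst (fst (nar_fwd (Z.to_nat r)))
  else fst (fst (nar_bwd (Z.to_nat (- r)))).

Definition pq (a : Z) : Z * Z :=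
  match a with
  | 1 => (1, 0) | 2 => (1, 2) | 3 => (4, -3) | 4 => (5, -2)
  | 5 => (6, 5) | 6 => (10, -1) | 7 => (15, -7) | 8 => (21, 6)
  | _ => (0, 0)
  end.

Example nar_chk : List.map narayana (List.map Z.of_nat (List.seq 0 10))
  = (0 :: 1 :: 1 :: 1 :: 2 :: 3 :: 4 :: 6 :: 9 :: 13 :: nil)%list.
Proof. reflexivity. Qed.
Example nar_neg : List.map (fun k => narayana (- Z.of_nat k)) (List.seq 1 6)
  = (0 :: 1 :: 0 :: -1 :: 1 :: 1 :: nil)%list.
Proof. reflexivity. Qed.

(* Main.v *)
Require Import Defs.
From Stdlib Require Import ZArith Lia.
Open Scope Z_scope.

Lemma fwd_rec (n : nat) : narayana (Z.of_nat n + 3) = narayana (Z.of_nat n + 2) + narayana (Z.of_nat n).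
Proof.
  unfold narayana.
  rewrite !(proj2 (Z.leb_le _ _)) by lia.
  replace (Z.to_nat (Z.of_nat n + 3)) with (S (S (S n))) by lia.
  replace (Z.to_nat (Z.of_nat n + 2)) with (S (S n)) by lia.
  rewrite Nat2Z.id. simpl. destruct (nar_fwd n) as [[a b] c]. simpl. ring.
Qed.

Lemma bwd_rec (n : nat) : narayana (- Z.of_nat n) = narayana (- Z.of_nat n - 1) + narayana (- Z.of_nat n - 3).
Proof.
  unfold narayana.
  rewrite (proj2 (Z.leb_gt 0 (- Z.of_nat n - 1))) by lia.
  rewrite (proj2 (Z.leb_gt 0 (- Z.of_nat n - 3))) by lia.
  replace (Z.to_nat (- (- Z.of_nat n - 1))) with (S n) by lia.
  replace (Z.to_nat (- (- Z.of_nat n - 3))) with (S (S (S n))) by lia.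
  destruct n as [|n].
  - reflexivity.
  - rewrite (proj2 (Z.leb_gt 0 _)) by lia.
    replace (Z.to_nat (- - Z.of_nat (S n))) with (S n) by lia.
    simpl. destruct (nar_bwd n) as [[a b] c]. simpl. ring.
Qed.

Lemma rec (r : Z) : narayana r = narayana (r - 1) + narayana (r - 3).
Proof.
  destruct (Z_le_gt_dec 3 r).
  - pose proof (fwd_rec (Z.to_nat (r - 3))) as H.
    rewrite Z2Nat.id in H by lia.
    replace (r - 3 + 3) with r in H by ring.
    replace (r - 3 + 2) with (r - 1) in H by ring. exact H.
  - destruct (Z_le_gt_dec r 0).
    + pose proof (bwd_rec (Z.to_nat (- r))) as H.
      rewrite Z2Nat.id in H by lia.
      rewrite Z.opp_involutive in H. exact H.
    + assert (r = 1 \/ r = 2) as [-> | ->] by lia; reflexivity.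
Qed.

Definition D (a m : Z) : Z :=
  narayana m - fst (pq a) * narayana (m - a) - snd (pq a) * narayana (m - 2 * a)
  - narayana (m - 3 * a).

Lemma D_rec a m : D a m = D a (m - 1) + D a (m - 3).
Proof.
  unfold D.
  rewrite (rec m), (rec (m - a)), (rec (m - 2 * a)), (rec (m - 3 * a)).
  replace (m - 1 - a) with (m - a - 1) by ring.
  replace (m - 1 - 2 * a) with (m - 2 * a - 1) by ring.
  replace (m - 1 - 3 * a) with (m - 3 * a - 1) by ring.
  replace (m - 3 - a) with (m - a - 3) by ring.
  replace (m - 3 - 2 * a) with (m - 2 * a - 3) by ring.
  replace (m - 3 - 3 * a) with (m - 3 * a - 3) by ring.
  ring.
Qed.

Lemma D_all a : D a 0 = 0 -> D a 1 = 0 -> D a 2 = 0 -> forall m, D a m = 0.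
Proof.
  intros H0 H1 H2.
  assert (F : forall n : nat, D a (Z.of_nat n) = 0 /\ D a (Z.of_nat n + 1) = 0 /\ D a (Z.of_nat n + 2) = 0).
  { induction n as [|n [A [B C]]]; [simpl; auto|].
    rewrite Nat2Z.inj_succ. unfold Z.succ.
    replace (Z.of_nat n + 1 + 1) with (Z.of_nat n + 2) by ring.
    split; [exact B|]. split; [exact C|].
    rewrite D_rec.
    replace (Z.of_nat n + 1 + 2 - 1) with (Z.of_nat n + 2) by ring.
    replace (Z.of_nat n + 1 + 2 - 3) with (Z.of_nat n) by ring. lia. }
  assert (G : forall n : nat, D a (- Z.of_nat n) = 0 /\ D a (- Z.of_nat n + 1) = 0 /\ D a (- Z.of_nat n + 2) = 0).
  { induction n as [|n [A [B C]]]; [simpl; auto|].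
    rewrite Nat2Z.inj_succ. unfold Z.succ.
    replace (- (Z.of_nat n + 1) + 1) with (- Z.of_nat n) by ring.
    replace (- (Z.of_nat n + 1) + 2) with (- Z.of_nat n + 1) by ring.
    split; [|split; [exact A|exact B]].
    pose proof (D_rec a (- Z.of_nat n + 2)) as E.
    replace (- Z.of_nat n + 2 - 1) with (- Z.of_nat n + 1) in E by ring.
    replace (- Z.of_nat n + 2 - 3) with (- (Z.of_nat n + 1)) in E by ring. lia. }
  intro m. destruct (Z_le_gt_dec 0 m).
  - rewrite <- (Z2Nat.id m) by lia. apply F.
  - replace m with (- Z.of_nat (Z.to_nat (- m))) by lia. apply G.
Qed.

Theorem theorem1 : forall (a m : Z), 1 <= a <= 8 ->
  narayana m = fst (pq a) * narayana (m - a) + snd (pq a) * narayana (m - 2 * a)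
               + narayana (m - 3 * a).
Proof.
  intros a m Ha.
  enough (D a m = 0) by (unfold D in *; lia).
  apply D_all;
  (assert (a = 1 \/ a = 2 \/ a = 3 \/ a = 4 \/ a = 5 \/ a = 6 \/ a = 7 \/ a = 8) as Hs by lia;
   destruct Hs as [->|[->|[->|[->|[->|[->|[->| ->]]]]]]]; vm_compute; reflexivity).
Qed.
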